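(* For each $r\in\mathbb{N}$ there is $\alpha>0$ such that the following holds: if $k\le r^2$, $F\subset M_r$ is a $k$-dimensional $C^*$-subalgebra with a set of matrix units $\{e_1,\dots,e_k\}$, and $q\in F$ is a projection, then $q\in\mathcal{Z}(F)$ or $\|[e_m,q]\|\ge\alpha$ for some $m\in\{1,\dots,k\}$.
   Context: If $F\cong M_{r_1}\oplus\dots\oplus M_{r_s}$, a set $\{e_1,\dots,e_k\}\subset F$ is a set of matrix units for $F$ if $k=\sum_i r_i^2$ and $\{e_1,\dots,e_k\}=\{f_i^{(l,m)}: i=1,\dots,s;\ 1\le l,m\le r_i\}$, where for each $i$, $\{f_i^{(l,m)}\}_{l,m}$ is a system of matrix units for the summand $M_{r_i}$. $\mathcal{Z}(F)$ is the center of $F$. *)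

(* Defs.v *)
From HB Require Import structures.
From mathcomp Require Import all_boot all_order all_algebra.
From mathcomp Require Import all_classical reals.
From mathcomp Require Export complex.
Set Implicit Arguments. Unset Strict Implicit. Unset Printing Implicit Defensive.
Import Order.TTheory GRing.Theory Num.Theory.
Local Open Scope ring_scope.

Definition adjmx (R : realType) (m n : nat) (A : 'M[R[i]]_(m, n)) : 'M[R[i]]_(n, m) :=
  (map_mx Num.conj A)^T.

Definition vnorm (R : realType) (n : nat) (v : 'cV[R[i]]_n) : R :=
  Num.sqrt (\sum_(j < n) (complex.Re (v j 0) ^+ 2 + complex.Im (v j 0) ^+ 2)).

Definition opnorm (R : realType) (r : nat) (A : 'M[R[i]]_r) : R :=
  sup [set vnorm (A *m v) | v in [set v : 'cV[R[i]]_r | vnorm v <= 1]]%classic.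

(* F is a C*-subalgebra of M_r: a (finite-dimensional, hence closed) complex
   linear subspace closed under products and adjoints. *)
Definition is_Cstar_subalgebra (R : realType) (r : nat) (F : {vspace 'M[R[i]]_r}) :=
  (forall a b, a \in F -> b \in F -> a *m b \in F) /\
  (forall a, a \in F -> adjmx a \in F).

(* f : forall i, 'I_(rs i) -> 'I_(rs i) -> M_r is a family of systems of matrix
   units for F ~= M_(rs 0) (+) ... (+) M_(rs (s-1)): for each i, f i is a system
   of matrix units (f^{(l,m)} f^{(l',m')} = delta_{m l'} f^{(l,m')},
   f^{(l,m)*} = f^{(m,l)}), distinct summands are orthogonal, and the f i l m
   span F.  Together with dim F = sum_i (rs i)^2 this says that
   (standard units of (+)_i M_(rs i)) |-> f i l m is a *-isomorphism onto F. *)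
Definition is_matrix_unit_family (R : realType) (r : nat) (F : {vspace 'M[R[i]]_r})
    (s : nat) (rs : 'I_s -> nat)
    (f : forall i : 'I_s, 'I_(rs i) -> 'I_(rs i) -> 'M[R[i]]_r) :=
  (forall i, 0 < rs i)%N /\
  (forall i l m l' m',
      f i l m *m f i l' m' = if m == l' then f i l m' else 0) /\
  (forall i j (l m : 'I_(rs i)) (l' m' : 'I_(rs j)),
      i != j -> f i l m *m f j l' m' = 0) /\
  (forall i l m, adjmx (f i l m) = f i m l) /\
  (forall i l m, f i l m \in F) /\
  (forall a, a \in F -> exists c : forall i : 'I_s, 'I_(rs i) -> 'I_(rs i) -> R[i],
      a = \sum_(i < s) \sum_(l < rs i) \sum_(m < rs i) c i l m *: f i l m).

Definition is_matrix_units (R : realType) (r k : nat) (F : {vspace 'M[R[i]]_r})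
    (e : 'I_k -> 'M[R[i]]_r) :=
  exists (s : nat) (rs : 'I_s -> nat)
         (f : forall i : 'I_s, 'I_(rs i) -> 'I_(rs i) -> 'M[R[i]]_r),
    is_matrix_unit_family F f /\
    k = (\sum_(i < s) (rs i) ^ 2)%N /\
    (forall x, (exists m, x = e m) <-> (exists i l m, x = f i l m)).

Definition is_projection (R : realType) (r : nat) (q : 'M[R[i]]_r) :=
  adjmx q = q /\ q *m q = q.

Definition in_center (R : realType) (r : nat) (F : {vspace 'M[R[i]]_r})
    (q : 'M[R[i]]_r) :=
  q \in F /\ forall a, a \in F -> a *m q = q *m a.

(* Main.v *)
Require Import Defs.
From HB Require Import structures.
From mathcomp Require Import all_boot all_order all_algebra.
From mathcomp Require Import all_classical reals.
From mathcomp Require Import complex.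
From mathcomp Require Import ring lra.
Import Order.TTheory GRing.Theory Num.Theory.
Set Implicit Arguments. Unset Strict Implicit. Unset Printing Implicit Defensive.
Local Open Scope ring_scope.

Section Norms.
Variable R : realType.
Implicit Types (c z : R[i]).

Definition n2 c : R := complex.Re c ^+ 2 + complex.Im c ^+ 2.
Definition nv2 n (v : 'cV[R[i]]_n) : R := \sum_(j < n) n2 (v j 0).

Lemma n2_ge0 c : 0 <= n2 c.
Proof. by rewrite /n2 addr_ge0 // sqr_ge0. Qed.

Lemma nv2_ge0 n (v : 'cV[R[i]]_n) : 0 <= nv2 v.
Proof. by apply: sumr_ge0 => j _; apply: n2_ge0. Qed.

Lemma n2M c z : n2 (c * z) = n2 c * n2 z.
Proof. case: c => a b; case: z => x y; rewrite /n2 /=; ring. Qed.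

Lemma n2D_le c z : n2 (c + z) <= 2 * n2 c + 2 * n2 z.
Proof.
case: c => a b; case: z => x y; rewrite /n2 /=.
have := sqr_ge0 (a - x); have := sqr_ge0 (b - y).
move=> H1 H2; rewrite sqrrB in H1; rewrite sqrrB in H2; rewrite !sqrrD; lra.
Qed.

Lemma nv2Z n c (v : 'cV[R[i]]_n) : nv2 (c *: v) = n2 c * nv2 v.
Proof. rewrite /nv2 mulr_sumr; apply: eq_bigr => j _; by rewrite mxE n2M. Qed.

Lemma nv2D_le n (v w : 'cV[R[i]]_n) : nv2 (v + w) <= 2 * nv2 v + 2 * nv2 w.
Proof.
rewrite /nv2 !mulr_sumr -big_split /=; apply: ler_sum => j _.
by rewrite mxE n2D_le.
Qed.

Lemma nv2_sum n N (w : 'I_N -> 'cV[R[i]]_n) :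
  nv2 (\sum_(i < N) w i) <= 2 ^+ N * \sum_(i < N) nv2 (w i).
Proof.
elim: N w => [|N IH] w.
  by rewrite !big_ord0 /nv2 big1 ?mulr0 // => j _; rewrite mxE /n2 /= expr0n /= addr0.
rewrite !big_ord_recr /=.
apply: le_trans (nv2D_le _ _) _.
have := IH (fun i => w (widen_ord (leqnSn N) i)) => H.
have h0 : 0 <= \sum_(i < N) nv2 (w (widen_ord (leqnSn N) i)) by apply: sumr_ge0 => *; apply: nv2_ge0.
have h1 : 0 <= nv2 (w ord_max) by apply: nv2_ge0.
have h2 : 1 <= (2:R) ^+ N by apply: exprn_ege1; lra.
have h3 : nv2 (w ord_max) <= 2 ^+ N * nv2 (w ord_max) by rewrite ler_peMl.
rewrite exprS mulrDr; lra.
Qed.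

Lemma nv2_sum_bound n N (w : 'I_N -> 'cV[R[i]]_n) B :
  (forall i, nv2 (w i) <= B) -> nv2 (\sum_(i < N) w i) <= 2 ^+ N * (N%:R * B).
Proof.
move=> H; apply: le_trans (nv2_sum _) _; rewrite ler_wpM2l ?exprn_ge0 //.
apply: le_trans (ler_sum _ (fun i _ => H i)) _.
by rewrite sumr_const card_ord mulr_natl.
Qed.

Lemma nv2_eq0 n (v : 'cV[R[i]]_n) : nv2 v = 0 -> v = 0.
Proof.
move=> H; apply/matrixP => j k; rewrite (ord1 k) mxE.
have := psumr_eq0P (fun j _ => n2_ge0 (v j 0)) H (i:=j) isT.
case: (v j 0) => a b; rewrite /n2 /= => E.
have ha : a = 0 by apply/eqP; rewrite -sqrf_eq0; apply/eqP; nra.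
have hb : b = 0 by apply/eqP; rewrite -sqrf_eq0; apply/eqP; nra.
by rewrite ha hb.
Qed.

Lemma n2_le_nv2 n (v : 'cV[R[i]]_n) j : n2 (v j 0) <= nv2 v.
Proof.
rewrite /nv2 (bigD1 j) //= lerDl; apply: sumr_ge0 => *; apply: n2_ge0.
Qed.

End Norms.

Section Adj.
Variable R : realType.

Lemma adjmxD m n (A B : 'M[R[i]]_(m, n)) : adjmx (A + B) = adjmx A + adjmx B.
Proof. by rewrite /adjmx map_mxD linearD. Qed.

Lemma adjmxN m n (A : 'M[R[i]]_(m, n)) : adjmx (- A) = - adjmx A.
Proof. by rewrite /adjmx map_mxN linearN. Qed.

Lemma adjmxB m n (A B : 'M[R[i]]_(m, n)) : adjmx (A - B) = adjmx A - adjmx B.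
Proof. by rewrite adjmxD adjmxN. Qed.

Lemma adjmxM m n p (A : 'M[R[i]]_(m, n)) (B : 'M[R[i]]_(n, p)) :
  adjmx (A *m B) = adjmx B *m adjmx A.
Proof. by rewrite /adjmx map_mxM trmx_mul. Qed.

Lemma nv2E n (v : 'cV[R[i]]_n) : nv2 v = complex.Re ((adjmx v *m v) 0 0).
Proof.
rewrite /nv2 mxE raddf_sum /=; apply: eq_bigr => j _.
rewrite /adjmx !mxE /n2; case: (v j 0) => a b /=; ring.
Qed.

Lemma nv2_proj n (p : 'M[R[i]]_n) (w : 'cV[R[i]]_n) :
  adjmx p = p -> p *m p = p -> nv2 (p *m w) <= nv2 w.
Proof.
move=> hp hpp.
have -> : nv2 w = nv2 (p *m w) + nv2 (w - p *m w).
  rewrite !nv2E -raddfD /=; congr (complex.Re _).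
  have e1 : adjmx (p *m w) *m (w - p *m w) = 0.
    by rewrite adjmxM hp -mulmxA mulmxBr mulmxA hpp subrr mulmx0.
  have e2 : adjmx (w - p *m w) *m (p *m w) = 0.
    by rewrite adjmxB adjmxM hp mulmxBl -mulmxA (mulmxA p p) hpp subrr.
  set a := p *m w in e1 e2 *.
  have L : forall x y : 'cV[R[i]]_n, adjmx x *m y = 0 -> adjmx y *m x = 0 ->
     adjmx (x + y) *m (x + y) = adjmx x *m x + adjmx y *m y.
    move=> x y h1 h2; rewrite adjmxD mulmxDl !mulmxDr h1 h2 addr0 add0r //.
  have := L a (w - a) e1 e2; rewrite addrC subrK => ->.
  by rewrite mxE.
by rewrite lerDl nv2_ge0.
Qed.

Lemma nv2_pisom n (f g : 'M[R[i]]_n) (w : 'cV[R[i]]_n) :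
  adjmx f = g -> adjmx (g *m f) = g *m f -> (g *m f) *m (g *m f) = g *m f ->
  nv2 (f *m w) <= nv2 w.
Proof.
move=> hf ha hi.
have -> : nv2 (f *m w) = nv2 ((g *m f) *m w).
  have E1 : adjmx (f *m w) *m (f *m w) = adjmx w *m (g *m f) *m w.
    by rewrite adjmxM hf !mulmxA.
  have E2 : adjmx ((g *m f) *m w) *m ((g *m f) *m w) = adjmx w *m (g *m f) *m w.
    by rewrite adjmxM ha -mulmxA (mulmxA (g *m f)) hi mulmxA.
  by rewrite !nv2E E1 E2.
exact: nv2_proj.
Qed.

End Adj.

Section Op.
Variable R : realType.

Lemma vnormE n (v : 'cV[R[i]]_n) : vnorm v = Num.sqrt (nv2 v).
Proof. by []. Qed.

Lemma mulmx_colsum n (A : 'M[R[i]]_n) (v : 'cV[R[i]]_n) :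
  A *m v = \sum_(k < n) v k 0 *: col k A.
Proof.
apply/matrixP => i j; rewrite (ord1 j) !mxE summxE; apply: eq_bigr => k _.
by rewrite !mxE mulrC.
Qed.

Definition crude n (A : 'M[R[i]]_n) : R := 2 ^+ n * \sum_(k < n) nv2 (col k A).

Lemma crude_ge0 n (A : 'M[R[i]]_n) : 0 <= crude A.
Proof.
by rewrite /crude mulr_ge0 ?exprn_ge0 // sumr_ge0 // => k _; apply: nv2_ge0.
Qed.

Lemma nv2_crude n (A : 'M[R[i]]_n) (v : 'cV[R[i]]_n) :
  nv2 (A *m v) <= crude A * nv2 v.
Proof.
rewrite mulmx_colsum; apply: le_trans (nv2_sum _) _.
rewrite /crude -mulrA ler_wpM2l ?exprn_ge0 // mulr_suml.
apply: ler_sum => k _; rewrite nv2Z mulrC ler_wpM2l ?nv2_ge0 //.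
exact: n2_le_nv2.
Qed.

Lemma n2_real (x : R) : n2 (x%:C)%C = x ^+ 2.
Proof. by rewrite /n2 /= expr0n /= addr0. Qed.

Lemma opnorm_facts n (A : 'M[R[i]]_n) :
  0 <= opnorm A /\ forall v, nv2 (A *m v) <= opnorm A ^+ 2 * nv2 v.
Proof.
set S := [set vnorm (A *m v) | v in [set v : 'cV[R[i]]_n | vnorm v <= 1]]%classic.
have hub : has_ubound S.
  exists (Num.sqrt (crude A)) => y [v /= hv <-].
  rewrite vnormE ler_wsqrtr //; apply: le_trans (nv2_crude _ _) _.
  rewrite ler_piMr ?crude_ge0 //.
  rewrite vnormE in hv; have := sqr_sqrtr (nv2_ge0 v); move=> <-.
  by rewrite expr_le1 // sqrtr_ge0.
have mem : forall v, vnorm v <= 1 -> vnorm (A *m v) <= opnorm A.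
  by move=> v hv; apply: (ub_le_sup hub); exists v.
have h0 : 0 <= opnorm A.
  apply: le_trans (mem 0 _); first by rewrite vnormE sqrtr_ge0.
  by rewrite vnormE /nv2 big1 ?sqrtr0 // => j _; rewrite mxE /n2 /= expr0n /= addr0.
split=> // v.
have [z|pos] := eqVneq (nv2 v) 0.
  by apply: le_trans (nv2_crude _ _) _; rewrite z !mulr0.
have pos' : 0 < nv2 v by rewrite lt_def pos nv2_ge0.
set s := Num.sqrt (nv2 v).
have sp : 0 < s by rewrite sqrtr_gt0.
have s2 : s ^+ 2 = nv2 v by rewrite sqr_sqrtr // nv2_ge0.
set w := ((s^-1)%:C)%C *: v.
have hw : vnorm w <= 1.
  rewrite vnormE nv2Z n2_real -s2 exprVn mulVf ?sqrtr1 //.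
  by rewrite expf_neq0 // gt_eqF.
have := mem w hw.
rewrite vnormE /w -scalemxAr nv2Z n2_real.
set X := nv2 (A *m v).
have hX : 0 <= X by apply: nv2_ge0.
move=> H.
have H2 : s^-1 ^+ 2 * X <= opnorm A ^+ 2.
  have := sqr_sqrtr (mulr_ge0 (sqr_ge0 s^-1) hX) => <-.
  by rewrite ler_pXn2r // ?nnegrE ?sqrtr_ge0.
have -> : X = s ^+ 2 * (s^-1 ^+ 2 * X).
  by rewrite mulrA -exprMn mulfV ?gt_eqF // expr1n mul1r.
by rewrite s2 mulrC ler_wpM2r // nv2_ge0.
Qed.

End Op.
Unset Implicit Arguments.
Section Main.
Variable R : realType.
Variables (r s : nat) (rs : 'I_s -> nat).
Variable f : forall i : 'I_s, 'I_(rs i) -> 'I_(rs i) -> 'M[R[i]]_r.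
Variable F : {vspace 'M[R[i]]_r}.
Hypothesis hmul : forall i l m l' m',
      f i l m *m f i l' m' = if m == l' then f i l m' else 0.
Hypothesis horth : forall i j (l m : 'I_(rs i)) (l' m' : 'I_(rs j)),
      i != j -> f i l m *m f j l' m' = 0.
Hypothesis hadj : forall i l m, adjmx (f i l m) = f i m l.
Hypothesis hspan : forall a, a \in F -> exists c : forall i : 'I_s, 'I_(rs i) -> 'I_(rs i) -> R[i],
      a = \sum_(i < s) \sum_(l < rs i) \sum_(m < rs i) c i l m *: f i l m.

Definition one i := \sum_(l < rs i) f i l l.

Lemma one_f i a b : one i *m f i a b = f i a b.
Proof.
rewrite mulmx_suml (bigD1 a) //= hmul eqxx big1 ?addr0 // => l /negbTE nl.
by rewrite hmul nl.
Qed.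

Lemma f_one i a b : f i a b *m one i = f i a b.
Proof.
rewrite mulmx_sumr (bigD1 b) //= hmul eqxx big1 ?addr0 // => l nl.
by rewrite hmul eq_sym (negbTE nl).
Qed.

Lemma one_comm i j a b : one i *m f j a b = f j a b *m one i.
Proof.
case: (eqVneq i j) => [Eij|nij]; first by subst j; rewrite one_f f_one.
rewrite mulmx_suml mulmx_sumr !big1 // => l _; apply: horth => //.
by rewrite eq_sym.
Qed.

Lemma comm_F y : (forall j a b, y *m f j a b = f j a b *m y) ->
  forall x, x \in F -> y *m x = x *m y.
Proof.
move=> H x /hspan [c ->].
rewrite mulmx_sumr mulmx_suml; apply: eq_bigr => j _.
rewrite mulmx_sumr mulmx_suml; apply: eq_bigr => a _.
rewrite mulmx_sumr mulmx_suml; apply: eq_bigr => b _.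
by rewrite -scalemxAr -scalemxAl H.
Qed.

Lemma one_idem i : one i *m one i = one i.
Proof. by rewrite {2}/one mulmx_sumr; apply: eq_bigr => l _; rewrite one_f. Qed.

Definition G i y := \sum_(l < rs i) \sum_(m < rs i) f i l m *m y *m f i m l.

Lemma G_trace i y : y \in F -> exists t : R[i], G i y = t *: one i.
Proof.
move=> /hspan [c ->].
pose P x := exists t : R[i], G i x = t *: one i.
have P0 : P 0.
  exists 0; rewrite scale0r /G big1 // => l _; rewrite big1 // => m _.
  by rewrite mulmx0 mul0mx.
have PD : forall x y, P x -> P y -> P (x + y).
  move=> x z [t1 h1] [t2 h2]; exists (t1 + t2).
  rewrite scalerDl -h1 -h2 /G -big_split /=; apply: eq_bigr => l _.
  rewrite -big_split /=; apply: eq_bigr => m _.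
  by rewrite mulmxDr mulmxDl.
have PZ : forall x a, P x -> P (a *: x).
  move=> x a [t h]; exists (a * t).
  rewrite -scalerA -h /G scaler_sumr; apply: eq_bigr => l _.
  rewrite scaler_sumr; apply: eq_bigr => m _.
  by rewrite -!scalemxAr -scalemxAl.
apply: (big_ind P P0 PD) => j _.
apply: (big_ind P P0 PD) => a _.
apply: (big_ind P P0 PD) => b _.
apply: PZ.
case: (eqVneq i j) => [Eij|nij].
  subst j.
  exists (b == a)%:R.
  rewrite /G.
  have E : forall l, \sum_(m < rs i) f i l m *m f i a b *m f i m l =
                      f i l b *m f i a l.
    move=> l; rewrite (bigD1 a) //= hmul eqxx big1 ?addr0 // => m /negbTE nm.
    by rewrite hmul nm mul0mx.
  rewrite (eq_bigr _ (fun l _ => E l)).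
  case: (eqVneq b a) => [->|nba].
    by rewrite scale1r /one; apply: eq_bigr => l _; rewrite hmul eqxx.
  rewrite scale0r big1 // => l _; by rewrite hmul (negbTE nba).
exists 0; rewrite scale0r /G big1 // => l _; rewrite big1 // => m _.
by rewrite horth // mul0mx.
Qed.


Lemma Re_natr n : complex.Re (n%:R : R[i]) = n%:R.
Proof. by rewrite raddfMn. Qed.

Lemma n2_ge_Re (c : R[i]) : complex.Re c ^+ 2 <= n2 c.
Proof. by rewrite /n2 lerDl sqr_ge0. Qed.

Lemma exists_nz (A : 'M[R[i]]_r) : A != 0 -> exists w : 'cV[R[i]]_r, A *m w != 0.
Proof.
move=> hA.
case: (pselect (exists j : 'I_r, A *m delta_mx j (0 : 'I_1) != 0)) => [[j hj]|nE].
  by exists (delta_mx j 0).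
have H : forall b : 'I_r, A *m delta_mx b (0 : 'I_1) = 0.
  by move=> b; apply/eqP; apply/negPn/negP => nz; apply: nE; exists b.
case/eqP: hA; apply/matrixP => a b.
have := H b; rewrite -colE => E.
by have := congr1 (fun M : 'cV[R[i]]_r => M a 0) E; rewrite !mxE.
Qed.

Lemma block_bound i (q : 'M[R[i]]_r) (alpha : R) : q \in F -> q *m q = q ->
  (0 < rs i)%N ->
  (forall a b, opnorm (f i a b *m q - q *m f i a b) <= alpha) ->
  one i *m q != 0 -> one i - one i *m q != 0 ->
  1 <= 4 * (2 ^+ (rs i) * 2 ^+ (rs i)) * alpha ^+ 2.
Proof.
move=> hq hqq npos hal hq0 hq1.
set n := rs i in npos hal *.
have qc : one i *m q = q *m one i := comm_F (one i) (one_comm i) q hq.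
have [t ht] := G_trace i q hq.
have qi1 : one i *m (one i *m q) = one i *m q by rewrite mulmxA one_idem.
have qi2 : one i *m q *m one i = one i *m q by rewrite -mulmxA -qc mulmxA one_idem.
have qi3 : (one i *m q) *m (one i *m q) = one i *m q by rewrite mulmxA qi2 -mulmxA hqq.
set qi := one i *m q in hq0 hq1 qi1 qi2 qi3 *.
have E1 : n%:R *: qi = \sum_(l < n) \sum_(m < n) f i l m *m (f i m l *m q).
  rewrite /qi /one mulmx_suml scaler_sumr; apply: eq_bigr => l _.
  rewrite (eq_bigr (fun _ => f i l l *m q)); last by move=> m _; rewrite mulmxA hmul eqxx.
  by rewrite sumr_const card_ord scaler_nat.
have Y : \sum_(l < n) \sum_(m < n) f i l m *m (f i m l *m q - q *m f i m l)
     = n%:R *: qi - t *: one i.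
  rewrite E1 -ht /G -sumrB; apply: eq_bigr => l _; rewrite -sumrB.
  by apply: eq_bigr => m _; rewrite mulmxBr (mulmxA (f i l m) q).
set Ym := n%:R *: qi - t *: one i in Y.
have hal0 : 0 <= alpha.
  have h := hal (Ordinal npos) (Ordinal npos).
  by apply: le_trans h; case: (opnorm_facts (f i (Ordinal npos) (Ordinal npos) *m q - q *m f i (Ordinal npos) (Ordinal npos))).
set K := 2 ^+ n * (n%:R * (2 ^+ n * (n%:R * alpha ^+ 2))).
have bound : forall v, nv2 (Ym *m v) <= K * nv2 v.
  move=> v.
  have -> : K * nv2 v = 2 ^+ n * (n%:R * (2 ^+ n * (n%:R * (alpha ^+ 2 * nv2 v)))).
    by rewrite /K; ring.
  rewrite -Y mulmx_suml; apply: nv2_sum_bound => l.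
  rewrite mulmx_suml; apply: nv2_sum_bound => m.
  rewrite -mulmxA.
  apply: le_trans (nv2_pisom (g := f i m l) _ _ _ _) _.
  - exact: hadj.
  - by rewrite hmul eqxx hadj.
  - by rewrite hmul eqxx hmul eqxx.
  set D := f i m l *m q - q *m f i m l.
  have [o0 o1] := opnorm_facts D.
  apply: le_trans (o1 v) _; rewrite ler_wpM2r ?nv2_ge0 //.
  by rewrite ler_pXn2r // ?nnegrE // hal.
have Kge : forall c (v : 'cV[R[i]]_r), v != 0 -> Ym *m v = c *: v -> n2 c <= K.
  move=> c v nz hv.
  have pos : 0 < nv2 v.
    rewrite lt_def nv2_ge0 andbT; apply/eqP => /nv2_eq0 z; by rewrite z eqxx in nz.
  have := bound v; rewrite hv nv2Z.
  by rewrite ler_pM2r.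
have [w hw] := exists_nz _ hq0.
have h1 : n2 (n%:R - t) <= K.
  apply: (Kge _ (qi *m w)) => //.
  by rewrite /Ym mulmxBl -!scalemxAl mulmxA qi3 mulmxA qi1 scalerBl.
have [w' hw'] := exists_nz _ hq1.
have h2 : n2 (- t) <= K.
  apply: (Kge _ ((one i - qi) *m w')) => //.
  rewrite /Ym mulmxBl -!scalemxAl !mulmxA mulmxBr qi3 qi2 subrr mul0mx scaler0 sub0r.
  by rewrite mulmxBr one_idem qi1 scaleNr.
have r1 := le_trans (n2_ge_Re _) h1.
have r2 := le_trans (n2_ge_Re _) h2.
rewrite raddfB /= Re_natr in r1.
rewrite raddfN /= in r2.
have hN : 0 < (n%:R : R) by rewrite ltr0n.
have key : n%:R ^+ 2 * 1 <= n%:R ^+ 2 * (4 * (2 ^+ n * 2 ^+ n) * alpha ^+ 2).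
  have -> : n%:R ^+ 2 * (4 * (2 ^+ n * 2 ^+ n) * alpha ^+ 2) = 4 * K :> R by rewrite /K; ring.
  set x := complex.Re t in r1 r2.
  have := sqr_ge0 (n%:R - 2 * x).
  rewrite mulr1; nra.
by rewrite ler_pM2l ?exprn_gt0 in key.
Qed.


Lemma main_sec (hpos : forall i, (0 < rs i)%N) q (alpha : R) : q \in F -> q *m q = q ->
  (forall i, 1 <= 4 * (2 ^+ rs i * 2 ^+ rs i) * alpha ^+ 2 -> False) ->
  (forall i a b, opnorm (f i a b *m q - q *m f i a b) <= alpha) ->
  forall x, x \in F -> x *m q = q *m x.
Proof.
move=> hq hqq hsmall hop x hx.
have hc : forall j a b, q *m f j a b = f j a b *m q.
  move=> j a b.
  have qc : one j *m q = q *m one j := comm_F (one j) (one_comm j) q hq.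
  have -> : q *m f j a b = (one j *m q) *m f j a b by rewrite qc -mulmxA one_f.
  have -> : f j a b *m q = f j a b *m (one j *m q) by rewrite mulmxA f_one.
  case: (eqVneq (one j *m q) 0) => [->|nz0]; first by rewrite mul0mx mulmx0.
  case: (eqVneq (one j - one j *m q) 0) => [z1|nz1].
    by move/eqP: z1; rewrite subr_eq0 => /eqP <-; rewrite one_f f_one.
  exfalso; apply: (hsmall j).
  exact: (block_bound j q alpha hq hqq (hpos j) (hop j) nz0 nz1).
by rewrite (comm_F q hc x hx).
Qed.

End Main.

Theorem proposition3p5 (R : realType) (r : nat) :
  exists alpha : R, 0 < alpha /\
    forall (k : nat) (F : {vspace 'M[R[i]]_r}) (e : 'I_k -> 'M[R[i]]_r)
           (q : 'M[R[i]]_r),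
      (k <= r ^ 2)%N ->
      is_Cstar_subalgebra F ->
      \dim F = k ->
      is_matrix_units F e ->
      q \in F ->
      is_projection q ->
      in_center F q \/
      exists m : 'I_k, alpha <= opnorm (e m *m q - q *m e m).
Proof.
pose beta : R := (2 ^ (r ^ 2 + 2))%:R.
have bpos : 0 < beta by rewrite ltr0n expn_gt0.
exists beta^-1; split; first by rewrite invr_gt0.
move=> k F e q hk hC hdim [s [rs [f [[hpos [hmul [horth [hadj [hin hspan]]]]] [hkdef hcorr]]]]] hq [hqa hqq].
case: (pselect (exists m, beta^-1 <= opnorm (e m *m q - q *m e m))) => [H|nH]; first by right.
left; split=> //.
apply: (main_sec R r s rs f F hmul horth hadj hspan hpos q beta^-1 hq hqq).
- move=> i.
  have hn : (rs i <= r ^ 2)%N.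
    apply: leq_trans hk; rewrite hkdef (bigD1 i) //= (leq_trans _ (leq_addr _ _)) //.
    by rewrite expnS expn1 leq_pmulr.
  have hx : (2 ^+ (rs i).+1 : R) < beta.
    have : ((2 ^ (rs i).+1)%:R : R) < beta by rewrite /beta ltr_nat ltn_exp2l // addn2 !ltnS.
    by rewrite natrX.
  set x : R := 2 ^+ (rs i).+1 in hx.
  have -> : 4 * (2 ^+ rs i * 2 ^+ rs i) * beta^-1 ^+ 2 = (x * beta^-1) ^+ 2 :> R.
    rewrite /x (exprS (2:R) (rs i)); move: (beta^-1) (2 ^+ rs i : R) => y z. ring.
  have h1 : x * beta^-1 < 1 by rewrite ltr_pdivrMr // mul1r.
  have h0 : 0 <= x * beta^-1 by apply: mulr_ge0; [rewrite /x exprn_ge0 // | rewrite invr_ge0 ltW].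
  move=> h; nra.
- move=> i a b; rewrite leNgt; apply/negP => lt; apply: nH.
  have [m hm] : exists m, f i a b = e m.
    have [hh _] := hcorr (f i a b).
    have [_ hh2] := hcorr (f i a b).
    have [m hm] := hh2 (ex_intro _ i (ex_intro _ a (ex_intro _ b erefl))).
    by exists m.
  by exists m; rewrite -hm ltW.
Qed.
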